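(* Let $\mathbf V$ be a variety of aperiodic monoids that does not contain the monoid $S(xyx)$. Suppose that $\mathbf V$ is not hereditarily finitely based. Then $\mathbf V$ satisfies either the identity $xyx\approx xyx^2$ or the identity $xyx\approx x^2yx$.
   Context: Monoid varieties are varieties of monoids considered as algebras with multiplication and a nullary operation for the identity element. A monoid is aperiodic if all its subgroups are trivial. A variety is hereditarily finitely based if all its subvarieties have a finite basis of identities. Let $F^1$ be the free monoid over a countably infinite alphabet; $S(xyx)$ is the Rees quotient monoid of $F^1$ over the ideal of all words that are not subwords of $xyx$. *)

(* Defs.v *)
From mathcomp Require Import all_boot.
Set Implicit Arguments. Unset Strict Implicit. Unset Printing Implicit Defensive.

Record Monoid := {
  mcarrier :> Type;
  mmul : mcarrier -> mcarrier -> mcarrier;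
  mone : mcarrier;
  mmulA : forall a b c, mmul a (mmul b c) = mmul (mmul a b) c;
  mmul1 : forall a, mmul mone a = a;
  mmul_1 : forall a, mmul a mone = a }.

(** Words over the countably infinite alphabet nat: elements of F^1. *)
Definition word := seq nat.
Definition identity := (word * word)%type.

Definition weval (M : Monoid) (phi : nat -> M) (w : word) : M :=
  foldr (fun a acc => mmul (phi a) acc) (mone M) w.

Definition msat (M : Monoid) (i : identity) : Prop :=
  forall phi : nat -> M, weval phi i.1 = weval phi i.2.

(** A monoid is aperiodic if all its subgroups are trivial: every subset G
    closed under multiplication which forms a group (with some identity e
    in G, not necessarily the identity of M) has at most one element. *)
Definition subgroup_of (M : Monoid) (G : M -> Prop) : Prop :=
  (forall a b, G a -> G b -> G (mmul a b)) /\
  exists e, G e /\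
    (forall a, G a -> mmul e a = a /\ mmul a e = a) /\
    (forall a, G a -> exists b, G b /\ mmul a b = e /\ mmul b a = e).

Definition aperiodic (M : Monoid) : Prop :=
  forall G : M -> Prop, subgroup_of G -> forall a b, G a -> G b -> a = b.

(** A monoid variety, given (Birkhoff) as the class of models of a set of
    identities. *)
Definition variety := identity -> Prop.

Definition in_var (V : variety) (M : Monoid) : Prop :=
  forall i, V i -> msat M i.

Definition var_sat (V : variety) (i : identity) : Prop :=
  forall M : Monoid, in_var V M -> msat M i.

Definition subvariety (U V : variety) : Prop :=
  forall M : Monoid, in_var U M -> in_var V M.

Definition finitely_based (V : variety) : Prop :=
  exists B : seq identity,
    forall M : Monoid, in_var V M <-> (forall i, i \in B -> msat M i).

Definition hereditarily_finitely_based (V : variety) : Prop :=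
  forall U : variety, subvariety U V -> finitely_based U.

Definition aperiodic_variety (V : variety) : Prop :=
  forall M : Monoid, in_var V M -> aperiodic M.

(** * The monoid S(xyx): Rees quotient of F^1 by the ideal of all words that
    are not subwords (factors) of xyx.  Letters: x = 0, y = 1.
    Elements: Some w with w a factor of xyx, and None = the zero (the ideal). *)
Definition xyx : word := [:: 0; 1; 0].

Definition rees_mul (a b : option word) : option word :=
  match a, b with
  | Some u, Some v => if infix (u ++ v) xyx then Some (u ++ v) else None
  | _, _ => None
  end.

Definition rees_ok (a : option word) : bool :=
  if a is Some w then infix w xyx else true.

Definition Sxyx_car := {a : option word | rees_ok a}.

Lemma rees_mul_ok (a b : Sxyx_car) : rees_ok (rees_mul (sval a) (sval b)).
Proof.
case: a => [[u|] ?] ; case: b => [[v|] ?] //=.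
by case: ifP.
Qed.

Definition Sxyx_mul (a b : Sxyx_car) : Sxyx_car :=
  exist _ (rees_mul (sval a) (sval b)) (rees_mul_ok a b).

Definition Sxyx_one : Sxyx_car := exist _ (Some [::]) (infix0s xyx).

Local Arguments infix : simpl never.
Lemma rees_mulA a b c : rees_mul a (rees_mul b c) = rees_mul (rees_mul a b) c.
Proof.
case: a => [u|] //; case: b => [v|] //; case: c => [w|] /=;
  last by case: ifP.
have L1 : infix (u ++ v ++ w) xyx -> infix (v ++ w) xyx.
  by move=> H; apply: (catl_infix (s := u)).
have L2 : infix (u ++ v ++ w) xyx -> infix (u ++ v) xyx.
  by move=> H; apply: (catr_infix (s := w)); rewrite -catA.
case: (boolP (infix (v ++ w) xyx)) => Hvw; case: (boolP (infix (u ++ v) xyx)) => Huv /=;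
  rewrite ?catA ?Hvw ?Huv //.
- by case: ifP => // H; case/negP: Huv; apply: L2; rewrite catA.
- by case: ifP => // H; case/negP: Hvw; apply: L1; rewrite catA.
Qed.

Lemma Sxyx_mulA (a b c : Sxyx_car) :
  Sxyx_mul a (Sxyx_mul b c) = Sxyx_mul (Sxyx_mul a b) c.
Proof. apply: val_inj => /=; exact: rees_mulA. Qed.

Lemma Sxyx_mul1 (a : Sxyx_car) : Sxyx_mul Sxyx_one a = a.
Proof. apply: val_inj; case: a => [[u|] /= Hu] //=; by rewrite Hu. Qed.

Lemma Sxyx_mul_1 (a : Sxyx_car) : Sxyx_mul a Sxyx_one = a.
Proof. apply: val_inj; case: a => [[u|] /= Hu] //=; by rewrite cats0 Hu. Qed.

Definition Sxyx : Monoid :=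
  {| mcarrier := Sxyx_car; mmul := Sxyx_mul; mone := Sxyx_one;
     mmulA := Sxyx_mulA; mmul1 := Sxyx_mul1; mmul_1 := Sxyx_mul_1 |}.

(* Main.v *)
Require Import Defs.
From mathcomp Require Import all_boot zify.
From Stdlib Require Import Classical ClassicalEpsilon FunctionalExtensionality PropExtensionality.
Set Implicit Arguments. Unset Strict Implicit. Unset Printing Implicit Defensive.

Local Arguments infix : simpl never.
Local Notation "x ** y" := (mmul x y) (at level 40, left associativity).

Definition mpow (M : Defs.Monoid) (x : M) (k : nat) : M := iter k (mmul x) (mone M).

Section Basics.
Variable M : Defs.Monoid.
Implicit Types x y : M.

Lemma mpowS x k : mpow x k.+1 = x ** mpow x k. Proof. by []. Qed.
Lemma mpow0 x : mpow x 0 = mone M. Proof. by []. Qed.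
Lemma mpowD x i j : mpow x (i + j) = mpow x i ** mpow x j.
Proof. elim: i => [|i IH]; first by rewrite add0n mmul1. by rewrite addSn !mpowS IH mmulA. Qed.
Lemma mpowSr x k : mpow x k.+1 = mpow x k ** x.
Proof. by rewrite -addn1 mpowD /= mmul_1. Qed.
Lemma mpow1m k : mpow (mone M) k = mone M.
Proof. elim: k => [|k IH] //=. by rewrite IH mmul1. Qed.
Lemma mpow_comm x i j : mpow x i ** mpow x j = mpow x j ** mpow x i.
Proof. by rewrite -!mpowD addnC. Qed.

Lemma weval_cat (phi : nat -> M) s t : weval phi (s ++ t) = weval phi s ** weval phi t.
Proof. elim: s => [|a s IH] /=; first by rewrite mmul1. by rewrite IH mmulA. Qed.
Lemma weval_nseq (phi : nat -> M) k c : weval phi (nseq k c) = mpow (phi c) k.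
Proof. elim: k => [|k IH] //=. by rewrite IH. Qed.
Lemma weval_cons (phi : nat -> M) a w : weval phi (a :: w) = phi a ** weval phi w.
Proof. by []. Qed.
Lemma weval_one (phi : nat -> M) a w : (forall c, c != a -> phi c = mone M) ->
  weval phi w = mpow (phi a) (count_mem a w).
Proof.
move=> H; elim: w => [|c w IH] //=; rewrite IH.
case: (eqVneq c a) => [->|ne]; first by rewrite add1n.
by rewrite H // mmul1 add0n.
Qed.
Lemma weval_eq_in (phi psi : nat -> M) w : {in w, phi =1 psi} -> weval phi w = weval psi w.
Proof.
elim: w => [|a w IH] //= H; rewrite H ?mem_head // IH // => c Hc.
by apply: H; rewrite inE Hc orbT.
Qed.
Lemma weval_all1 (phi : nat -> M) w : {in w, forall c, phi c = mone M} -> weval phi w = mone M.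
Proof.
elim: w => [|a w IH] //= H; rewrite H ?mem_head // mmul1 IH // => c Hc.
by apply: H; rewrite inE Hc orbT.
Qed.

Lemma stab x n : mpow x n = mpow x n.+1 -> forall j, n <= j -> mpow x j = mpow x j.+1.
Proof.
move=> H j Hj; rewrite -(subnK Hj) -addnS !mpowD. by rewrite H.
Qed.
Lemma stab2 x n : mpow x n = mpow x n.+1 -> forall i j, n <= i -> n <= j -> mpow x i = mpow x j.
Proof.
move=> H.
have K : forall i d, n <= i -> mpow x i = mpow x (i + d).
  move=> i d Hi; elim: d => [|d IH]; first by rewrite addn0.
  by rewrite IH addnS (stab H) // (leq_trans Hi) // leq_addr.
move=> i j Hi Hj; case: (leqP i j) => Hij.
  by rewrite -(subnKC Hij) -K.
by rewrite -(subnKC (ltnW Hij)) -K.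
Qed.
Lemma capE x n : mpow x n = mpow x n.+1 -> forall j, mpow x j = mpow x (minn j n).
Proof.
move=> H j; case: (leqP j n) => Hj //.
apply: (stab2 H) => //. exact: ltnW.
Qed.

Lemma shrink x n a b : mpow x n = mpow x n.+1 -> a < b -> mpow x a = mpow x b ->
  mpow x a = mpow x a.+1.
Proof.
move=> Hn ab Hab.
set d := b - a.
have Hd : forall j, mpow x (a + d + j) = mpow x (a + j).
  move=> j; by rewrite /d (subnKC (ltnW ab)) !mpowD Hab.
have P : forall m j, mpow x (a + j + m * d) = mpow x (a + j).
  move=> m j; elim: m => [|m IH]; first by rewrite mul0n addn0.
  rewrite mulSn.
  have -> : a + j + (d + m * d) = a + d + (j + m * d) by lia.
  by rewrite Hd addnA IH.
have d1 : 0 < d by rewrite subn_gt0.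
rewrite -[in LHS](addn0 a) -(P n 0) -(addn1 a) -(P n 1) addn0.
have -> : a + 1 + n * d = (a + n * d).+1 by lia.
apply: (stab Hn).
have : n <= n * d by rewrite leq_pmulr.
lia.
Qed.

Lemma triv_pow x n k : 0 < k -> mpow x n = mpow x n.+1 -> mpow x k = mone M -> x = mone M.
Proof.
move=> k0 Hn Hk.
have P : forall m, mpow x (m * k) = mone M.
  elim=> [|m IH] //; by rewrite mulSn mpowD Hk IH mmul1.
have Hnk : n <= n * k by rewrite leq_pmulr.
have := stab Hn Hnk. rewrite mpowS P mmul_1. by move=> <-.
Qed.

End Basics.

Fixpoint fo (w : word) : word :=
  if w is a :: w' then a :: filter (predC1 a) (fo w') else [::].

Lemma mem_fo w c : (c \in fo w) = (c \in w).
Proof.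
elim: w => [|a w IH] //=; rewrite !inE mem_filter IH /=.
by case: (eqVneq c a) => // ->.
Qed.

Lemma fo_uniq w : uniq (fo w).
Proof.
elim: w => [|a w IH] //=; rewrite mem_filter /= eqxx /= filter_uniq //.
Qed.

Lemma fo_filter a w : fo (filter (predC1 a) w) = filter (predC1 a) (fo w).
Proof.
elim: w => [|c w IH] //=.
case: (eqVneq c a) => [e|ne] /=; first subst c.
  by rewrite ?eqxx /= IH filter_id.
rewrite ?ne /= IH -!filter_predI; congr (_ :: _); apply: eq_filter => x /=.
by rewrite andbC.
Qed.

Section Core.
Variable M : Defs.Monoid.
Hypothesis hE1 : forall X P : M, X ** (P ** X) = X ** (X ** P).

Lemma swapX (X P W : M) : X ** (P ** (X ** W)) = X ** ((X ** P) ** W).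
Proof.
transitivity ((X ** (P ** X)) ** W); first by rewrite !mmulA.
by rewrite hE1 !mmulA.
Qed.

Lemma G1gen (phi : nat -> M) a w : forall P,
  phi a ** (P ** weval phi w) =
  mpow (phi a) (count_mem a w).+1 ** (P ** weval phi (filter (predC1 a) w)).
Proof.
elim: w => [|c w IH] P.
  by rewrite /= !mmul_1.
rewrite weval_cons.
case: (eqVneq c a) => [e|ne].
  subst c.
  have -> : filter (predC1 a) (a :: w) = filter (predC1 a) w by rewrite /= eqxx.
  have -> : count_mem a (a :: w) = (count_mem a w).+1 by rewrite /= eqxx.
  rewrite swapX IH (mpowSr _ (count_mem a w).+1). by rewrite !mmulA.
have -> : filter (predC1 a) (c :: w) = c :: filter (predC1 a) w by rewrite /= ne.
have -> : count_mem a (c :: w) = count_mem a w by rewrite /= (negbTE ne).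
rewrite weval_cons [P ** (_ ** _)]mmulA IH.
by rewrite !mmulA.
Qed.

Lemma G1 (phi : nat -> M) a w :
  weval phi (a :: w) = mpow (phi a) (count_mem a w).+1 ** weval phi (filter (predC1 a) w).
Proof.
have := G1gen phi a w (mone M). by rewrite !mmul1 /=.
Qed.

Lemma NF (phi : nat -> M) w :
  weval phi w = weval (fun c => mpow (phi c) (count_mem c w)) (fo w).
Proof.
move: {2}(size w).+1 (ltnSn (size w)) => m.
elim: m w => [|m IH] [|a w] //= Hs.
rewrite -weval_cons G1 IH; last first.
  by rewrite size_filter; exact: leq_ltn_trans (count_size _ _) Hs.
rewrite fo_filter eqxx add1n; congr (_ ** _).
apply: weval_eq_in => c; rewrite mem_filter /= => /andP [ne _].
by rewrite count_filter /= eq_sym (negbTE ne) add0n; congr mpow; apply: eq_count => x /=;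
  case: (eqVneq x c) => // ->; rewrite ne.
Qed.

Lemma prod1 (h : nat -> M) b s : {in s, forall c, c != b -> h c = mone M} ->
  uniq s -> b \in s -> weval h s = h b.
Proof.
elim: s => [|c s IH] //= H /andP [cs us].
case: (eqVneq c b) => [e|ne]; first subst b.
  move=> _; rewrite weval_all1 ?mmul_1 // => x xs; apply: H; first by rewrite inE xs orbT.
  by apply: contraNneq cs => <-.
rewrite inE eq_sym (negbTE ne) /= => bs.
by rewrite H ?mem_head // mmul1 IH // => x xs; apply: H; rewrite inE xs orbT.
Qed.

Lemma prod2 (h : nat -> M) a b s : a != b ->
  {in s, forall c, c != a -> c != b -> h c = mone M} ->
  uniq s -> a \in s -> b \in s ->
  weval h s = if index a s < index b s then h a ** h b else h b ** h a.
Proof.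
move=> ab; elim: s => [|c s IH] //= H /andP [cs us].
case: (eqVneq c a) => [e|ca]; first subst a.
  move=> _; rewrite inE eq_sym (negbTE ab) /= => bs.
  congr (_ ** _); apply: prod1 => // x xs xb.
  apply: H; rewrite ?inE ?xs ?orbT //; by apply: contraNneq cs => <-.
case: (eqVneq c b) => [e|cb]; first subst b.
  rewrite inE eq_sym (negbTE ca) /= => as_ _.
  congr (_ ** _); apply: prod1 => // x xs xa.
  apply: H; rewrite ?inE ?xs ?orbT //; by apply: contraNneq cs => <-.
rewrite !inE eq_sym (negbTE ca) eq_sym (negbTE cb) /= => as_ bs.
rewrite H ?mem_head // mmul1 ltnS IH // => x xs; apply: H; by rewrite inE xs orbT.
Qed.

Lemma comm_prod (g : nat -> M) x s : {in s, forall b, g b ** x = x ** g b} ->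
  weval g s ** x = x ** weval g s.
Proof.
elim: s => [|b s IH] /= H; first by rewrite mmul1 mmul_1.
rewrite -mmulA IH; last by move=> c cs; apply: H; rewrite inE cs orbT.
by rewrite mmulA H ?mem_head // mmulA.
Qed.

Lemma weval_perm (g : nat -> M) s t : uniq s -> uniq t -> s =i t ->
  (forall a b, a \in s -> b \in s -> index a s < index b s -> index b t < index a t ->
     g a ** g b = g b ** g a) ->
  weval g s = weval g t.
Proof.
elim: s t => [|a s IH] t us ut st H.
  case: t ut st H => // c t _ st; have := st c; by rewrite mem_head in_nil.
have aint : a \in t by rewrite -st mem_head.
move: ut st H; case/splitPr: aint => t1 t2 ut st H.
move: us => /= /andP [as_ us].
have pe : perm_eq (a :: t1 ++ t2) (t1 ++ a :: t2) by apply/permPl; exact: (perm_catCA [:: a] t1 t2).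
have ut' : uniq (a :: t1 ++ t2) by rewrite (perm_uniq pe).
move: ut' => /= /andP [at12 ut12].
have at1 : a \notin t1 by apply: contra at12; rewrite mem_cat => ->.
have at2 : a \notin t2 by apply: contra at12; rewrite mem_cat => ->; rewrite orbT.
symmetry.
rewrite weval_cat (weval_cons g a t2) mmulA (comm_prod (g:=g) (x:=g a) (s:=t1)); last first.
  move=> b bt1; symmetry; apply: H.
  - exact: mem_head.
  - by rewrite st mem_cat bt1.
  - rewrite /= eqxx /=; case: (eqVneq a b) => //= ab.
    by move: at1; rewrite ab bt1.
  - by rewrite !index_cat bt1 (negbTE at1) /= eqxx addn0 index_mem.
rewrite -mmulA -weval_cat ?(weval_cons g a s); congr (_ ** _); symmetry.
apply: IH => //.
  move=> x; apply/idP/idP => [xs|].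
    have : x \in t1 ++ a :: t2 by rewrite -st inE xs orbT.
    rewrite !mem_cat inE; case: (eqVneq x a) => [xa|_] //=.
    by move: as_; rewrite -xa xs.
  rewrite mem_cat => xt.
  have : x \in a :: s by rewrite st mem_cat inE; case/orP: xt => ->; rewrite ?orbT.
  rewrite inE; case/orP => // /eqP xa; move: xt; rewrite xa (negbTE at1) (negbTE at2).
  by [].
move=> x y xs ys ixy iyx.
have xa : x != a by apply: contraNneq as_ => <-.
have ya : y != a by apply: contraNneq as_ => <-.
have ax : (a == x) = false by rewrite eq_sym (negbTE xa).
have ay : (a == y) = false by rewrite eq_sym (negbTE ya).
apply: H; rewrite ?inE ?xs ?ys ?orbT //=.
  by rewrite ?ax ?ay.
move: iyx; rewrite !index_cat /= ?ax ?ay.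
have := index_mem y t1; have := index_mem x t1.
case: (boolP (y \in t1)) => yt1; case: (boolP (x \in t1)) => xt1.
- lia.
- move=> /negbT h1 h2 h3; lia.
- move=> h1 _ h3; move: (ltn_trans (leq_ltn_trans (leq_addr _ _) h3) h1); by rewrite ltnn.
- move=> /negbT h1 /negbT h2 h3; lia.
Qed.

End Core.

Definition proj (M : Defs.Monoid) (a b : nat) (X Y : M) : nat -> M :=
  fun c => if c == a then X else if c == b then Y else mone M.

Definition nf1 n a (w : word) : word := nseq (minn (count_mem a w) n) 0 ++ nseq 0 1.
Definition nf2 n a b (w : word) : word :=
  if index a (fo w) < index b (fo w)
  then nseq (minn (count_mem a w) n) 0 ++ nseq (minn (count_mem b w) n) 1
  else nseq (minn (count_mem b w) n) 1 ++ nseq (minn (count_mem a w) n) 0.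

Lemma proj01_0 (M : Defs.Monoid) (X Y : M) : proj 0 1 X Y 0 = X. Proof. by []. Qed.
Lemma proj01_1 (M : Defs.Monoid) (X Y : M) : proj 0 1 X Y 1 = Y. Proof. by []. Qed.

Lemma weval01 (M : Defs.Monoid) (psi : nat -> M) w : (forall c, c \in w -> c < 2) ->
  weval psi w = weval (proj 0 1 (psi 0) (psi 1)) w.
Proof.
move=> H; apply: weval_eq_in => c /H; rewrite /proj.
by case: c => [|[|c]].
Qed.

Lemma nf1_letters n a w c : c \in nf1 n a w -> c < 2.
Proof. by rewrite /nf1 cats0 mem_nseq => /andP [_ /eqP ->]. Qed.
Lemma nf2_letters n a b w c : c \in nf2 n a b w -> c < 2.
Proof.
rewrite /nf2; case: ifP => _; rewrite mem_cat !mem_nseq;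
  by case/orP => /andP [_ /eqP ->].
Qed.

Section Core2.
Variable M : Defs.Monoid.
Hypothesis hE1 : forall X P : M, X ** (P ** X) = X ** (X ** P).
Variable n : nat.
Hypothesis hE2 : forall X : M, mpow X n = mpow X n.+1.

Lemma P2raw a b (X Y : M) w : a != b -> a \in w -> b \in w ->
  weval (proj a b X Y) w =
  if index a (fo w) < index b (fo w)
  then mpow X (count_mem a w) ** mpow Y (count_mem b w)
  else mpow Y (count_mem b w) ** mpow X (count_mem a w).
Proof.
move=> ab aw bw.
rewrite (NF hE1) (prod2 (a := a) (b := b)) ?fo_uniq ?mem_fo //.
  by rewrite /proj eqxx eq_sym (negbTE ab) eqxx.
move=> c _ ca cb; by rewrite /proj (negbTE ca) (negbTE cb) mpow1m.
Qed.

Lemma P1 a (X Y : M) w : weval (proj a a X X) w = weval (proj 0 1 X Y) (nf1 n a w).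
Proof.
rewrite (weval_one (a := a)); last by move=> c ca; rewrite /proj (negbTE ca).
rewrite /nf1 weval_cat !weval_nseq proj01_0 mpow0 mmul_1 /proj eqxx.
exact: (capE (hE2 X) (count_mem a w)).
Qed.

Lemma P2 a b (X Y : M) w : a != b -> a \in w -> b \in w ->
  weval (proj a b X Y) w = weval (proj 0 1 X Y) (nf2 n a b w).
Proof.
move=> ab aw bw; rewrite P2raw // /nf2.
case: ifP => _; by rewrite weval_cat !weval_nseq proj01_0 proj01_1 -(capE (hE2 X)) -(capE (hE2 Y)).
Qed.

Lemma core_M u v :
  (forall a (X : M), weval (proj a a X X) u = weval (proj a a X X) v) ->
  (forall a b (X Y : M), a != b -> a \in u -> b \in u -> a \in v -> b \in v ->
     weval (proj a b X Y) u = weval (proj a b X Y) v) ->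
  forall phi : nat -> M, weval phi u = weval phi v.
Proof.
move=> C1' C2 phi.
have C1 : forall a (X : M), mpow X (count_mem a u) = mpow X (count_mem a v).
  move=> a X; have := C1' a X.
  by rewrite !(weval_one (a := a)) ?/proj ?eqxx // => c ca; rewrite (negbTE ca).
case: (classic (forall c, (c \in u) = (c \in v))) => Hc; last first.
  (* content differs: trivial monoid *)
  have [c Hc'] : exists c, (c \in u) != (c \in v).
    case: (not_all_ex_not _ _ Hc) => c Hc0; exists c; by apply/eqP.
  have triv : forall X : M, X = mone M.
    move=> X.
    wlog : u v C1 C1' C2 Hc Hc' / (c \in u) && (c \notin v).
      move=> W; case: (boolP (c \in u)) Hc' => cu /=.
        case cv: (c \in v) => // _; apply: (W u v) => //; by rewrite cu cv.
      case cv: (c \in v) => // _; apply: (W v u) => //.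
      all: first [ by move=> a Y; symmetry; apply: C1 | by move=> a Y; symmetry; apply: C1'
                 | by move=> a b Z Y ab *; symmetry; apply: C2
                 | by move=> H; apply: Hc => d; rewrite H | by rewrite cv (negbTE cu) | idtac ].
    case/andP => cu cv.
    apply: (@triv_pow _ X n (count_mem c u)) => //.
      by rewrite -has_count has_pred1.
    by rewrite C1 (count_memPn cv).
  by rewrite (triv (weval phi u)) (triv (weval phi v)).
rewrite (NF hE1 phi u) (NF hE1 phi v).
have -> : weval (fun c => mpow (phi c) (count_mem c v)) (fo v) =
          weval (fun c => mpow (phi c) (count_mem c u)) (fo v).
  by apply: weval_eq_in => c _; rewrite C1.
apply: weval_perm; rewrite ?fo_uniq //.
  by move=> c; rewrite !mem_fo Hc.
move=> a b au bu iab iba.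
have ab : a != b by apply: contraTneq iab => ->; rewrite ltnn.
rewrite mem_fo in au; rewrite mem_fo in bu.
have av : a \in v by rewrite -Hc.
have bv : b \in v by rewrite -Hc.
have := C2 a b (phi a) (phi b) ab au bu av bv.
rewrite !P2raw // iab ltnNge (ltnW iba) /= -!C1 => ->.
by [].
Qed.
End Core2.

Lemma exfilter (T : eqType) (P : T -> Prop) (L : seq T) :
  exists L' : seq T, forall x, x \in L' <-> (x \in L /\ P x).
Proof.
elim: L => [|y L [L0 H0]]; first by exists (Nil T) => x; rewrite in_nil; split => //; case.
case: (classic (P y)) => Py.
  exists (y :: L0) => x; rewrite !inE; split.
    case/orP => [/eqP -> | /H0 [xL Px]]; first by rewrite eqxx.
    by rewrite xL orbT.
  case=> /orP [/eqP -> | xL] Px; first by rewrite eqxx.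
  by apply/orP; right; apply/H0.
exists L0 => x; rewrite inE; split.
  by case/H0 => xL Px; rewrite xL orbT.
case=> /orP [/eqP -> | xL] Px //.
by apply/H0.
Qed.

Definition NFs n : seq word :=
  [seq nseq i 0 ++ nseq j 1 | i <- iota 0 n.+1, j <- iota 0 n.+1] ++
  [seq nseq j 1 ++ nseq i 0 | i <- iota 0 n.+1, j <- iota 0 n.+1].
Definition Lid n : seq identity := [seq (p, q) | p <- NFs n, q <- NFs n].

Lemma minn_in k n : minn k n \in iota 0 n.+1.
Proof. by rewrite mem_iota add0n ltnS geq_minr. Qed.

Lemma nf1_in n a w : nf1 n a w \in NFs n.
Proof.
rewrite /nf1 mem_cat; apply/orP; left.
apply: (allpairs_f (fun i j => nseq i 0 ++ nseq j 1)); first exact: minn_in.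
by rewrite mem_iota.
Qed.

Lemma nf2_in n a b w : nf2 n a b w \in NFs n.
Proof.
rewrite /nf2 mem_cat; case: ifP => _; apply/orP; [left|right].
  by apply: (allpairs_f (fun i j => nseq i 0 ++ nseq j 1)); exact: minn_in.
by apply: (allpairs_f (fun i j => nseq j 1 ++ nseq i 0)); exact: minn_in.
Qed.

Lemma pair_in n (p q : word) : p \in NFs n -> q \in NFs n -> (p, q) \in Lid n.
Proof. move=> hp hq; exact: (allpairs_f pair). Qed.

Definition E1 : identity := ([:: 0; 1; 0], [:: 0; 0; 1]).
Definition E2 n : identity := (nseq n 0, nseq n.+1 0).

Lemma msatE1 (M : Defs.Monoid) :
  msat M E1 <-> forall X P : M, X ** (P ** X) = X ** (X ** P).
Proof.
split.
  move=> H X P; have := H (proj 0 1 X P); by rewrite /weval /= !mmul_1.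
move=> H phi; rewrite /weval /= !mmul_1; exact: H.
Qed.

Lemma msatE2 (M : Defs.Monoid) n :
  msat M (E2 n) <-> forall X : M, mpow X n = mpow X n.+1.
Proof.
split.
  move=> H X; have := H (fun _ => X); by rewrite /E2 /= !weval_nseq.
move=> H phi; rewrite /E2 /= !weval_nseq; exact: H.
Qed.

Theorem core_left (V : variety) n :
  (forall N, in_var V N -> forall X P : N, X ** (P ** X) = X ** (X ** P)) ->
  (forall N, in_var V N -> forall X : N, mpow X n = mpow X n.+1) ->
  hereditarily_finitely_based V.
Proof.
move=> hV1 hV2 U sub.
have [LU HLU] := exfilter (fun s => var_sat U s) (Lid n).
exists [:: E1, E2 n & LU] => M; split.
  move=> hU i; rewrite !inE => /or3P [/eqP -> | /eqP -> | iL].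
  - apply/msatE1; exact: hV1 (sub M hU).
  - apply/msatE2; exact: hV2 (sub M hU).
  - have [_ hs] := (HLU i).1 iL; exact: hs M hU.
move=> hB.
have h1 := (msatE1 M).1 (hB E1 (mem_head _ _)).
have h2 : forall X : M, mpow X n = mpow X n.+1.
  apply: (msatE2 M n).1; apply: hB; by rewrite !inE eqxx orbT.
have hL : forall s, s \in Lid n -> var_sat U s -> msat M s.
  move=> s s1 s2; apply: hB; rewrite !inE; apply/or3P; apply: Or33; apply/HLU; by split.
move=> [u v] huv.
have hN : forall N, in_var U N ->
   [/\ forall X P : N, X ** (P ** X) = X ** (X ** P),
       forall X : N, mpow X n = mpow X n.+1 & msat N (u, v)].
  move=> N hN; split; [exact: hV1 (sub N hN) | exact: hV2 (sub N hN) | exact: hN _ huv].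
apply: (core_M h1 h2).
  move=> a X.
  rewrite (P1 h2 a X X u) (P1 h2 a X X v).
  have := hL (nf1 n a u, nf1 n a v) (pair_in (nf1_in _ _ _) (nf1_in _ _ _)).
  apply.
  move=> N /hN [hN1 hN2 hN3] psi /=.
  rewrite (weval01 psi (@nf1_letters _ _ _)) (weval01 psi (@nf1_letters _ _ _)).
  rewrite -!(P1 hN2 a (psi 0) (psi 1)).
  exact: hN3.
move=> a b X Y ab au bu av bv.
rewrite (P2 h1 h2 X Y ab au bu) (P2 h1 h2 X Y ab av bv).
have := hL (nf2 n a b u, nf2 n a b v) (pair_in (nf2_in _ _ _ _) (nf2_in _ _ _ _)).
apply.
move=> N /hN [hN1 hN2 hN3] psi /=.
rewrite (weval01 psi (@nf2_letters _ _ _ _)) (weval01 psi (@nf2_letters _ _ _ _)).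
rewrite -(P2 hN1 hN2 (psi 0) (psi 1) ab au bu) -(P2 hN1 hN2 (psi 0) (psi 1) ab av bv).
exact: hN3.
Qed.

Section Op.
Variable M : Defs.Monoid.
Let opmul (a b : M) : M := mmul b a.
Lemma opA (a b c : M) : opmul a (opmul b c) = opmul (opmul a b) c.
Proof. by rewrite /opmul mmulA. Qed.
Lemma op1 (a : M) : opmul (mone M) a = a. Proof. by rewrite /opmul mmul_1. Qed.
Lemma op_1 (a : M) : opmul a (mone M) = a. Proof. by rewrite /opmul mmul1. Qed.
Definition Mop : Defs.Monoid :=
  {| mcarrier := M; mmul := opmul; mone := mone M;
     mmulA := opA; mmul1 := op1; mmul_1 := op_1 |}.
End Op.

Lemma weval_op (M : Defs.Monoid) (phi : nat -> M) w :
  weval (M := Mop M) phi w = weval phi (rev w).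
Proof.
elim: w => [|a w IH] //=.
by rewrite rev_cons -cats1 weval_cat /= mmul_1 -IH.
Qed.

Definition revI (i : identity) : identity := (rev i.1, rev i.2).
Definition Vr (V : variety) : variety := fun i => V (revI i).

Lemma msat_op (M : Defs.Monoid) i : msat (Mop M) i <-> msat M (revI i).
Proof.
split => H phi; move: (H phi); by rewrite !weval_op.
Qed.

Lemma revIK i : revI (revI i) = i.
Proof. by case: i => a b; rewrite /revI /= !revK. Qed.

Lemma msat_opop (M : Defs.Monoid) i : msat (Mop (Mop M)) i <-> msat M i.
Proof. by rewrite msat_op msat_op revIK. Qed.

Lemma in_var_r W (M : Defs.Monoid) : in_var (Vr W) M <-> in_var W (Mop M).
Proof.
split.
  move=> H i Wi; apply/msat_op; apply: H; by rewrite /Vr revIK.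
move=> H i Wi; rewrite -[i]revIK; apply/msat_op; exact: H.
Qed.

Lemma in_var_opop W (M : Defs.Monoid) : in_var W (Mop (Mop M)) <-> in_var W M.
Proof.
split => H i Wi; [apply/msat_opop | apply/(msat_opop M i).1]; exact: H.
Qed.

Lemma hfb_r V : hereditarily_finitely_based (Vr V) -> hereditarily_finitely_based V.
Proof.
move=> H U sub.
have sub' : subvariety (Vr U) (Vr V).
  move=> M hM; apply/in_var_r; apply: sub; exact/in_var_r.
have [B HB] := H _ sub'.
exists (map revI B) => M.
rewrite -in_var_opop -in_var_r HB; split.
  move=> h j /mapP [i iB ->]; apply/msat_op; exact: h.
move=> h i iB; apply/msat_op; apply: h; exact: map_f.
Qed.

Lemma mpow_op (M : Defs.Monoid) (X : M) k : mpow (M := Mop M) X k = mpow X k.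
Proof. elim: k => [|k IH] //=. by rewrite IH -mpowSr. Qed.

Theorem core_right (V : variety) n :
  (forall N, in_var V N -> forall X P : N, X ** (P ** X) = P ** (X ** X)) ->
  (forall N, in_var V N -> forall X : N, mpow X n = mpow X n.+1) ->
  hereditarily_finitely_based V.
Proof.
move=> h1 h2; apply: hfb_r; apply: (core_left (n := n)).
  move=> N /in_var_r hN X P; have := h1 _ hN X P => /= E.
  by rewrite mmulA E -mmulA.
move=> N /in_var_r hN X; have := h2 _ hN X; by rewrite !mpow_op.
Qed.

Lemma ap_pow (N : Defs.Monoid) (X : N) k d : 0 < d ->
  mpow X k = mpow X (k + d) -> aperiodic N -> mpow X k = mpow X k.+1.
Proof.
move=> d0 Hk Hap.
have per1 : forall i, k <= i -> mpow X (i + d) = mpow X i.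
  move=> i ki; rewrite -(subnKC ki).
  have -> : k + (i - k) + d = (i - k) + (k + d) by lia.
  by rewrite mpowD -Hk -mpowD addnC.
have per : forall i m, k <= i -> mpow X (i + m * d) = mpow X i.
  move=> i m ki; elim: m => [|m IH]; first by rewrite mul0n addn0.
  have -> : i + m.+1 * d = (i + m * d) + d by rewrite mulSn; lia.
  rewrite per1 // (leq_trans ki) //; exact: leq_addr.
set G := fun y : N => exists j, k <= j /\ y = mpow X j.
set E := (k.+1 * d).
have kE : k <= E.
  rewrite /E mulSn; have : k <= k * d by rewrite leq_pmulr. lia.
have sg : subgroup_of G.
  split.
    move=> a b [i [ki ->]] [j [kj ->]]; exists (i + j); split; last by rewrite mpowD.
    by rewrite (leq_trans ki) // leq_addr.
  exists (mpow X E); split; first by exists E.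
  split.
    move=> a [j [kj ->]]; rewrite -!mpowD; split.
      have -> : E + j = j + 1 * (E) by lia.
      rewrite /E mulnA per //.
    have -> : j + E = j + k.+1 * d by [].
    by rewrite per.
  move=> a [j [kj ->]].
  exists (mpow X (j * (d - 1) + E)); split.
    exists (j * (d - 1) + E); split => //; exact: leq_trans kE (leq_addl _ _).
  have ex : j + (j * (d - 1) + E) = E + j * d.
    rewrite -[in j * d](subnK d0) mulnDr muln1; lia.
  rewrite -!mpowD ex per //; split => //.
  by rewrite addnC ex per.
have := Hap G sg (mpow X k) (mpow X k.+1).
apply.
  by exists k.
by exists k.+1.
Qed.

Definition Z2 : Defs.Monoid :=
  {| mcarrier := bool; mmul := addb; mone := false;
     mmulA := addbA; mmul1 := addFb; mmul_1 := addbF |}.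

Lemma weval_Z2 (phi : nat -> Z2) w : weval phi w = odd (count phi w).
Proof. elim: w => [|a w IH] //=. by rewrite IH oddD oddb. Qed.

Lemma var_pow (V : variety) : aperiodic_variety V ->
  exists n, forall N, in_var V N -> forall X : N, mpow X n = mpow X n.+1.
Proof.
move=> Hap.
case: (classic (exists k l, k < l /\ forall N, in_var V N -> forall X : N, mpow X k = mpow X l)).
  case=> k [l [kl H]]; exists k => N hN X.
  apply: (ap_pow (d := l - k)); first by rewrite subn_gt0.
    by rewrite subnKC ?H // ltnW.
  exact: Hap.
move=> Hno; exfalso.
have inZ : in_var V Z2.
  move=> [u v] huv phi /=.
  rewrite !weval_Z2.
  have pe : perm_eq u v.
    apply/allP => x _; apply/eqP.
    have E : forall N, in_var V N -> forall X : N, mpow X (count_mem x u) = mpow X (count_mem x v).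
      move=> N hN X; have := hN _ huv (proj x x X X) => /=.
      by rewrite !(weval_one (a := x)) /proj ?eqxx // => c cx; rewrite (negbTE cx).
    case: (ltngtP (count_mem x u) (count_mem x v)) => // h.
      by exfalso; apply: Hno; exists (count_mem x u), (count_mem x v).
    exfalso; apply: Hno; exists (count_mem x v), (count_mem x u); split => // N hN X.
    by rewrite E.
  by rewrite (permP pe).
have := Hap Z2 inZ (fun _ => True).
have sg : subgroup_of (M := Z2) (fun _ => True).
  split => //; exists false; split => //; split.
    move=> a _; split; [exact: addFb | exact: addbF].
  by move=> a _; exists a; split => //; rewrite /= addbb.
move=> /(_ sg false true I I) //.
Qed.

Lemma catIl (p s t : word) : p ++ s = p ++ t -> s = t.
Proof. elim: p => [|a p IH] /=; first by []. by case => /IH. Qed.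
Lemma catIr (q s t : word) : s ++ q = t ++ q -> s = t.
Proof. move/(congr1 rev); rewrite !rev_cat => /catIl /(congr1 rev); by rewrite !revK. Qed.

Lemma xyx_letters c : c \in xyx -> c < 2.
Proof. by rewrite /xyx !inE => /or3P [] /eqP ->. Qed.

Lemma sxyx_word (V : variety) : ~ in_var V Sxyx ->
  exists w : word, [/\ w != xyx, all (fun c => c < 2) w &
    forall N, in_var V N -> forall psi : nat -> N, weval psi xyx = weval psi w].
Proof.
move=> HnS.
have [[u v] [Vi Hm]] : exists i, V i /\ ~ msat Sxyx i.
  apply: NNPP => H; apply: HnS => i Vi; apply: NNPP => Hm; apply: H; by exists i.
have [phi Hphi] := not_all_ex_not _ _ Hm.
pose th (a : nat) : word := if sval (phi a) is Some t then t else [:: 1; 1].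
pose ths (w : word) : word := flatten (map th w).
have thl : forall a c, c \in th a -> c < 2.
  move=> a c; rewrite /th; case: (phi a) => [[t|] ht] /=.
    move=> ct; apply: xyx_letters; exact: (mem_subseq (infixW (ht : infix t xyx)) ct).
  by rewrite !inE => /orP [] /eqP ->.
have thsl : forall w c, c \in ths w -> c < 2.
  move=> w c /flattenP [x /mapP [a _ ->]]; exact: thl.
have sv : forall w, sval (weval (M := Sxyx) phi w) =
    if infix (ths w) xyx then Some (ths w) else None.
  elim=> [|a w IH] //=.
  rewrite IH /ths /= -/(ths w) /th.
  case: (phi a) => [[t|] /= ht].
    case: ifP => hw /=; first by [].
    case: ifP => // h; move: hw; by rewrite (catl_infix h).
  by [].
have subst : forall N, in_var V N -> forall psi : nat -> N,
    weval psi (ths u) = weval psi (ths v).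
  move=> N hN psi.
  have E : forall w, weval (fun a => weval psi (th a)) w = weval psi (ths w).
    elim=> [|a w IH] //=; by rewrite IH /ths /= weval_cat.
  by rewrite -!E; apply: (hN _ Vi).
have key : exists t s, [/\ infix t xyx, t != s, (forall c, c \in s -> c < 2) &
    forall N, in_var V N -> forall psi : nat -> N, weval psi t = weval psi s].
  have Hs : sval (weval phi u) <> sval (weval phi v).
    move=> E; apply: Hphi; exact: val_inj.
  rewrite !sv in Hs.
  case hu: (infix (ths u) xyx) in Hs.
    exists (ths u), (ths v); split => //.
    - apply/eqP => E; apply: Hs; by rewrite -E hu.
    - exact: thsl.
  case hv: (infix (ths v) xyx) in Hs; last by [].
  exists (ths v), (ths u); split => //.
  - apply/eqP => E; move: hu; by rewrite -E hv.
  - exact: thsl.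
  - by move=> N hN psi; rewrite (subst N hN).
case: key => t [s [ht ts sl Vts]].
case/infixP: ht => p [q E].
exists (p ++ s ++ q); split.
- apply/eqP => E'; move: ts; rewrite E in E'.
  move/catIl/catIr: E' => ->; by rewrite eqxx.
- apply/allP => c; rewrite !mem_cat => /or3P [cp|cs|cq].
  + by apply: xyx_letters; rewrite E mem_cat cp.
  + exact: sl.
  + by apply: xyx_letters; rewrite E !mem_cat cq !orbT.
- by move=> N hN psi; rewrite E !weval_cat (Vts N hN psi).
Qed.

Lemma weval_proj1 (M : Defs.Monoid) a (X : M) w :
  weval (proj a a X X) w = mpow X (count_mem a w).
Proof.
rewrite (weval_one (a := a)); first by rewrite /proj eqxx.
by move=> c ca; rewrite /proj (negbTE ca).
Qed.

Lemma all0 w : all (fun c => c < 2) w -> count_mem 1 w = 0 -> w = nseq (size w) 0.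
Proof.
elim: w => [|c w IH] //= /andP [c2 wa].
case: c c2 => [|[|c]] //= _ h.
by rewrite -IH.
Qed.

Lemma split1 w : all (fun c => c < 2) w -> count_mem 1 w = 1 ->
  exists a b, w = nseq a 0 ++ 1 :: nseq b 0.
Proof.
elim: w => [|c w IH] //= /andP [c2 wa].
case: c c2 => [|[|c]] //= _ h.
  have [a [b ->]] := IH wa h; by exists a.+1, b.
exists 0, (size w); rewrite /= -all0 //.
by move: h; rewrite add1n => -[].
Qed.

Lemma classify (V : variety) n w :
  (forall N, in_var V N -> forall X : N, mpow X n = mpow X n.+1) ->
  w != xyx -> all (fun c => c < 2) w ->
  (forall N, in_var V N -> forall psi : nat -> N, weval psi xyx = weval psi w) ->
  [\/ (forall N, in_var V N -> forall X P : N, X ** (P ** X) = X ** (X ** P)),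
      (forall N, in_var V N -> forall X P : N, X ** (P ** X) = P ** (X ** X)),
      var_sat V ([:: 0; 1; 0], [:: 0; 1; 0; 0]) |
      var_sat V ([:: 0; 1; 0], [:: 0; 0; 1; 0])].
Proof.
move=> hP wne wall hw.
have triv : (forall N, in_var V N -> forall X : N, X = mone N) ->
    var_sat V ([:: 0; 1; 0], [:: 0; 1; 0; 0]).
  move=> T N hN phi.
  by rewrite (T N hN (weval phi _)) (T N hN (weval phi _)).
have idem : (forall N, in_var V N -> forall X : N, X ** X = X) ->
    var_sat V ([:: 0; 1; 0], [:: 0; 0; 1; 0]).
  move=> I N hN phi /=.
  by rewrite [in RHS]mmulA I.
have hy : forall N, in_var V N -> forall Y : N, mpow Y 1 = mpow Y (count_mem 1 w).
  move=> N hN Y; have := hw N hN (proj 1 1 Y Y); by rewrite !weval_proj1.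
have mp1 : forall (N : Defs.Monoid) (X : N), mpow X 1 = X by move=> N X; rewrite /= mmul_1.
have mp2 : forall (N : Defs.Monoid) (X : N), mpow X 2 = X ** X by move=> N X; rewrite /= mmul_1.
case cy: (count_mem 1 w) => [|[|c]].
- apply: Or43; apply: triv => N hN Y.
  by have := hy N hN Y; rewrite cy mp1.
- have [a [b wE]] := split1 wall cy.
  have hxy : forall N, in_var V N -> forall X Y : N, X ** (Y ** X) = mpow X a ** (Y ** mpow X b).
    move=> N hN X Y; have := hw N hN (proj 0 1 X Y).
    have -> : weval (proj 0 1 X Y) xyx = X ** (Y ** X) by rewrite /= mmul_1.
    by rewrite wE weval_cat weval_cons !weval_nseq proj01_0 proj01_1.
  have hx2 : forall N, in_var V N -> forall X : N, mpow X 2 = mpow X (a + b).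
    move=> N hN X; have := hxy N hN X (mone N); by rewrite !mmul1 -mpowD mp2.
  case E: (a + b) => [|[|[|k]]].
  + apply: Or43; apply: triv => N hN X.
    have := shrink (hP N hN X) (isT : 0 < 2) (esym (etrans (hx2 N hN X) (congr1 _ E))).
    by rewrite mp1 => <-.
  + apply: Or44; apply: idem => N hN X.
    by rewrite -mp2 hx2 // E mp1.
  + have : (a = 0 /\ b = 2) \/ (a = 1 /\ b = 1) \/ (a = 2 /\ b = 0) by lia.
    case=> [[ea eb]|[[ea eb]|[ea eb]]]; subst a b.
    * apply: Or42 => N hN X Y; rewrite hxy //. by rewrite mmul1 mp2.
    * by move: wne; rewrite wE eqxx.
    * apply: Or41 => N hN X Y; rewrite hxy //. by rewrite mp2 mmul_1 mmulA.
  + have h23 : forall N, in_var V N -> forall X : N, forall i j, 2 <= i -> 2 <= j -> mpow X i = mpow X j.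
      move=> N hN X; apply: stab2.
      apply: (shrink (hP N hN X) (_ : 2 < a + b)); first by rewrite E.
      exact: hx2.
    case: (leqP 2 a) => ha.
    * apply: Or44 => N hN phi /=; rewrite !mmul_1.
      rewrite !(hxy N hN) [in RHS]mmulA -mpowS (h23 N hN _ a.+1 a) //.
      exact: leqW.
    * apply: Or43 => N hN phi /=; rewrite !mmul_1.
      have hb : 2 <= b by lia.
      transitivity ((phi 0 ** (phi 1 ** phi 0)) ** phi 0); last by rewrite !mmulA.
      rewrite !(hxy N hN) -!mmulA -mpowSr (h23 N hN _ b.+1 b) //.
      exact: leqW.
- apply: Or44; apply: idem => N hN Y.
  have := hy N hN Y; rewrite cy => h.
  have := shrink (hP N hN Y) (_ : 1 < c.+2) h.
  by rewrite mp1 mp2 => <-.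
Qed.

Theorem lemma2p1 (V : variety) :
  aperiodic_variety V ->
  ~ in_var V Sxyx ->
  ~ hereditarily_finitely_based V ->
  var_sat V ([:: 0; 1; 0], [:: 0; 1; 0; 0]) \/
  var_sat V ([:: 0; 1; 0], [:: 0; 0; 1; 0]).
Proof.
move=> Hap HnS HnH.
have [n hP] := var_pow Hap.
have [w [wne wall hw]] := sxyx_word HnS.
case: (classify hP wne wall hw) => [hl | hr | h | h].
- by exfalso; apply: HnH; exact: core_left hl hP.
- by exfalso; apply: HnH; exact: core_right hr hP.
- by left.
- by right.
Qed.
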